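(* Let $M$ be a matroid on $E=[n]$, $t,u$ positive integers, $\mathcal F$ the regular mixed subdivision defined below. For an ordered partition $(X,Y)$ of $[n]\setminus\{1\}$ let $T_{(X,Y)}=\mathbf e_{B}+u\Delta_{\{1\}\cup X}+t\nabla_{\{1\}\cup Y}$ be the top-degree face of $\mathcal F$ indexed by it ($B$ the unique basis making this a top-degree face). Let $(X_1,Y_1)\ne(X_2,Y_2)$ be two such partitions whose top-degree faces $T_1,T_2$ contain a common point $p$, and let $(X_3,Y_3)$ be a partition of $[n]\setminus\{1\}$ with $X_1\cap X_2\subseteq X_3$ and $Y_1\cap Y_2\subseteq Y_3$. Then $p\in T_3=T_{(X_3,Y_3)}$, and the bases of $T_1,T_2,T_3$ all coincide.
   Context: $M$ is a matroid on $E=[n]=\{1,\dots,n\}$. $P(M)\subseteq\mathbb R^E$ is the convex hull of the indicator vectors $\mathbf e_B$ of bases $B$. For nonempty $S\subseteq E$, $\Delta_S=\operatorname{conv}\{\mathbf e_i:i\in S\}$, $\nabla_S=-\Delta_S$, $\Delta=\Delta_E$, $\nabla=\nabla_E$. The subdivision: fix reals $0<\alpha_1<\dots<\alpha_n$, $0<\beta_1<\dots<\beta_n$; let $\mathit{Lift}=\operatorname{conv}\{(u\mathbf e_i,\alpha_i)\}+(P(M)\times\{0\})+\operatorname{conv}\{(-t\mathbf e_i,\beta_i)\}\subseteq\mathbb R^E\times\mathbb R$. The lower faces of $\mathit{Lift}$ are the faces on which some linear functional with last coordinate $-1$ attains its maximum; their projections to $\mathbb R^E$ form the regular mixed subdivision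 $\mathcal F$ of $u\Delta+P(M)+t\nabla$. Each cell is canonically written $F+G+H$ (projections of the faces of the three summands of $\mathit{Lift}$ maximizing the same functional), with $F$ a face of $u\Delta$, $G$ a face of $P(M)$, $H$ a face of $t\nabla$. A top-degree face is a maximal cell $F+G+H$ of $\mathcal F$ with $G$ a vertex of $P(M)$. For each $X,Y$ with $X\cup Y=E$, $X\cap Y=\{1\}$ there is a unique basis $B$ such that $u\Delta_X+\mathbf e_B+t\nabla_Y$ is a top-degree face. *)

(* Defs.v *)
From HB Require Import structures.
From mathcomp Require Import all_boot all_order all_algebra.
Set Implicit Arguments. Unset Strict Implicit. Unset Printing Implicit Defensive.
Import Order.TTheory GRing.Theory Num.Theory.
Local Open Scope ring_scope.

Section Defs.
Variable R : realFieldType.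
Variable k : nat.
Notation pt := 'rV[R]_k.

Definition is_matroid (bases : {set {set 'I_k}}) : Prop :=
  bases != set0 /\
  forall B1 B2, B1 \in bases -> B2 \in bases ->
    forall x, x \in B1 :\: B2 ->
      exists2 y, y \in B2 :\: B1 & (B1 :\ x) :|: [set y] \in bases.

Definition evec (i : 'I_k) : pt := \row_j (j == i)%:R.
Definition ind (B : {set 'I_k}) : pt := \row_j (j \in B)%:R.

Definition in_conv (I : finType) (S : {set I}) (v : I -> pt) (p : pt) : Prop :=
  exists w : I -> R,
    (forall i, 0 <= w i) /\ (forall i, i \notin S -> w i = 0) /\
    \sum_(i in S) w i = 1 /\ p = \sum_(i in S) w i *: v i.

Definition msum3 (A B C : pt -> Prop) (p : pt) : Prop :=
  exists a b c, A a /\ B b /\ C c /\ p = a + b + c.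

Definition uDelta (u : R) (S : {set 'I_k}) : pt -> Prop :=
  in_conv S (fun i => u *: evec i).
Definition tNabla (t : R) (S : {set 'I_k}) : pt -> Prop :=
  in_conv S (fun i => - (t *: evec i)).

Variables (bases : {set {set 'I_k}}) (u t : R) (alpha beta : 'I_k -> R).

(* For the linear functional (c, -1) on R^E x R, the maximizing faces of the
   three summands of Lift (given by index sets / sets of bases). *)
Definition face1 (c : pt) : {set 'I_k} :=
  [set i | [forall j, u * c 0 j - alpha j <= u * c 0 i - alpha i]].
Definition wt (c : pt) (B : {set 'I_k}) : R := \sum_(i in B) c 0 i.
Definition face2 (c : pt) : {set {set 'I_k}} :=
  [set B in bases | [forall B' in bases, wt c B' <= wt c B]].
Definition face3 (c : pt) : {set 'I_k} :=
  [set i | [forall j, - (t * c 0 j) - beta j <= - (t * c 0 i) - beta i]].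

Definition cell (c : pt) : pt -> Prop :=
  msum3 (uDelta u (face1 c)) (in_conv (face2 c) ind) (tNabla t (face3 c)).

Definition maximal_cell (c : pt) : Prop :=
  forall c' : pt, (forall p, cell c p -> cell c' p) ->
                  (forall p, cell c' p -> cell c p).

Definition top_degree_face (X : {set 'I_k}) (B : {set 'I_k})
    (Y : {set 'I_k}) : Prop :=
  exists c : pt, [/\ face1 c = X, face2 c = [set B], face3 c = Y &
                     maximal_cell c].

Definition Tface (X B Y : {set 'I_k}) : pt -> Prop :=
  msum3 (uDelta u X) (fun q => q = ind B) (tNabla t Y).

End Defs.

(* Main.v *)
Require Import Defs.
From HB Require Import structures.
From mathcomp Require Import all_boot all_order all_algebra.
From mathcomp Require Import ring lra.
Import Order.TTheory GRing.Theory Num.Theory.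
Local Open Scope ring_scope.
Set Implicit Arguments. Unset Strict Implicit. Unset Printing Implicit Defensive.

Section Helpers.
Variable R : realFieldType.
Variable k : nat.

Definition Lf (c p : 'rV[R]_k) : R := \sum_j c 0 j * p 0 j.

Lemma L_add c p q : Lf c (p + q) = Lf c p + Lf c q.
Proof. rewrite /Lf -big_split /=; apply: eq_bigr => j _; by rewrite mxE mulrDr. Qed.

Lemma L_sum (I : finType) (S : {set I}) c (f : I -> 'rV[R]_k) :
  Lf c (\sum_(i in S) f i) = \sum_(i in S) Lf c (f i).
Proof.
rewrite /Lf; under eq_bigr do rewrite summxE big_distrr /=.
by rewrite exchange_big.
Qed.

Lemma L_scale c a p : Lf c (a *: p) = a * Lf c p.
Proof. rewrite /Lf big_distrr; apply: eq_bigr => j _; by rewrite !mxE /= mulrCA. Qed.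

Lemma L_opp c p : Lf c (- p) = - Lf c p.
Proof. by rewrite -scaleN1r L_scale mulN1r. Qed.

Lemma L_evec c i : Lf c (evec R i) = c 0 i.
Proof.
rewrite /Lf (bigD1 i) //= big1 => [|j hj]; rewrite !mxE ?eqxx.
  by rewrite mulr1 addr0.
by rewrite (negbTE hj) mulr0.
Qed.

Lemma L_ind c B : Lf c (ind R B) = wt c B.
Proof.
rewrite /Lf /wt [RHS]big_mkcond; apply: eq_bigr => j _; rewrite mxE.
by case: (j \in B); rewrite ?mulr1 ?mulr0.
Qed.

Lemma Lrep c (S T : {set 'I_k}) B (w v : 'I_k -> R) (u t : R) :
  Lf c (\sum_(i in S) w i *: (u *: evec R i) + ind R B +
        \sum_(j in T) v j *: - (t *: evec R j)) =
  \sum_(i in S) w i * (u * c 0 i) + wt c B + \sum_(j in T) v j * (- (t * c 0 j)).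
Proof.
rewrite !L_add !L_sum L_ind; congr (_ + _ + _); apply: eq_bigr => i _.
  by rewrite !L_scale L_evec.
by rewrite L_scale L_opp L_scale L_evec.
Qed.

Lemma wsum_le (I : finType) (S : {set I}) (w f : I -> R) m :
  (forall i, 0 <= w i) -> \sum_(i in S) w i = 1 -> (forall i, f i <= m) ->
  \sum_(i in S) w i * f i <= m /\
  (\sum_(i in S) w i * f i = m -> forall i, i \in S -> w i != 0 -> f i = m).
Proof.
move=> w0 ws fm.
have e : m - \sum_(i in S) w i * f i = \sum_(i in S) w i * (m - f i).
  rewrite -[X in X - _]mul1r -ws big_distrl /= -sumrB.
  by apply: eq_bigr => i _; ring.
have ge : forall i, 0 <= w i * (m - f i).
  by move=> i; apply: mulr_ge0; rewrite ?subr_ge0.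
split.
  by rewrite -subr_ge0 e; apply: sumr_ge0.
move=> eq i iS wi.
have /psumr_eq0P h : \sum_(i in S) w i * (m - f i) = 0 by rewrite -e eq subrr.
have /eqP := h (fun j _ => ge j) i iS.
by rewrite mulf_eq0 (negbTE wi) /= subr_eq0 => /eqP.
Qed.

Lemma sum_out (I : finType) (S : {set I}) (F : I -> R) :
  (forall i, i \notin S -> F i = 0) -> \sum_(i in S) F i = \sum_i F i.
Proof.
move=> h; rewrite [RHS](bigID (mem S)) /= [X in _ = _ + X]big1 ?addr0 //.
Qed.

Lemma sum_outV (I : finType) (S : {set I}) (F : I -> 'rV[R]_k) :
  (forall i, i \notin S -> F i = 0) -> \sum_(i in S) F i = \sum_i F i.
Proof.
move=> h; rewrite [RHS](bigID (mem S)) /= [X in _ = _ + X]big1 ?addr0 //.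
Qed.

Lemma wt_exch (c : 'rV[R]_k) (B : {set 'I_k}) x y : x \in B -> y \notin B ->
  wt c (B :\ x :|: [set y]) = wt c B - c 0 x + c 0 y.
Proof.
move=> hx hy; rewrite /wt setUC big_setU1 /=; last by rewrite in_setD1 (negbTE hy) andbF.
rewrite [in RHS](big_setD1 x hx) /=; ring.
Qed.

End Helpers.

Section Main.
Variables (R : realFieldType) (k : nat) (bases : {set {set 'I_k}}).
Variables (u t : R) (alpha beta : 'I_k -> R) (i0 : 'I_k).

Definition Phi (c : 'rV[R]_k) (S : {set 'I_k}) w B (T : {set 'I_k}) v :=
  \sum_(i in S) w i * (u * c 0 i - alpha i) + wt c B +
  \sum_(j in T) v j * (- (t * c 0 j) - beta j).
Definition Hgt (S : {set 'I_k}) (w : 'I_k -> R) (T : {set 'I_k}) v :=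
  \sum_(i in S) w i * alpha i + \sum_(j in T) v j * beta j.
Definition Mval (c : 'rV[R]_k) B0 :=
  (u * c 0 i0 - alpha i0) + wt c B0 + (- (t * c 0 i0) - beta i0).

Lemma L_Phi (c : 'rV[R]_k) (S T B : {set 'I_k}) (w v : 'I_k -> R) :
  Lf c (\sum_(i in S) w i *: (u *: evec R i) + ind R B +
        \sum_(j in T) v j *: - (t *: evec R j)) =
  Phi c S w B T v + Hgt S w T v.
Proof.
rewrite Lrep /Phi /Hgt.
have e1 : \sum_(i in S) w i * (u * c 0 i) =
   \sum_(i in S) w i * (u * c 0 i - alpha i) + \sum_(i in S) w i * alpha i.
  by rewrite -big_split; apply: eq_bigr => i _ /=; ring.
have e2 : \sum_(j in T) v j * (- (t * c 0 j)) =
   \sum_(j in T) v j * (- (t * c 0 j) - beta j) + \sum_(j in T) v j * beta j.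
  by rewrite -big_split; apply: eq_bigr => i _ /=; ring.
rewrite e1 e2; ring.
Qed.

Lemma face1P (c : 'rV[R]_k) (S : {set 'I_k}) : face1 u alpha c = S -> i0 \in S ->
  (forall j, u * c 0 j - alpha j <= u * c 0 i0 - alpha i0) /\
  (forall j, j \in S <-> u * c 0 j - alpha j = u * c 0 i0 - alpha i0).
Proof.
move=> hS h0; rewrite -hS inE in h0; move/forallP: h0 => h0.
split=> // j; rewrite -hS inE; split.
  by move/forallP => hj; apply/eqP; rewrite eq_le hj h0.
by move=> e; apply/forallP => j'; rewrite e.
Qed.

Lemma face3P (c : 'rV[R]_k) (S : {set 'I_k}) : face3 t beta c = S -> i0 \in S ->
  (forall j, - (t * c 0 j) - beta j <= - (t * c 0 i0) - beta i0) /\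
  (forall j, j \in S <-> - (t * c 0 j) - beta j = - (t * c 0 i0) - beta i0).
Proof.
move=> hS h0; rewrite -hS inE in h0; move/forallP: h0 => h0.
split=> // j; rewrite -hS inE; split.
  by move/forallP => hj; apply/eqP; rewrite eq_le hj h0.
by move=> e; apply/forallP => j'; rewrite e.
Qed.

Lemma face2P (c : 'rV[R]_k) (B : {set 'I_k}) : face2 bases c = [set B] ->
  [/\ B \in bases, (forall B', B' \in bases -> wt c B' <= wt c B) &
     (forall B', B' \in bases -> wt c B' = wt c B -> B' = B)].
Proof.
move=> h; have : B \in face2 bases c by rewrite h set11.
rewrite inE => /andP [Bb /forall_inP hB]; split=> // B' hB' e.
have : B' \in face2 bases c.
  by rewrite inE hB' /=; apply/forall_inP => B'' h''; rewrite e hB.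
by rewrite h in_set1 => /eqP.
Qed.

Lemma Phi_le (c : 'rV[R]_k) (S0 B0 T0 S B T : {set 'I_k}) (w v : 'I_k -> R) :
  face1 u alpha c = S0 -> i0 \in S0 -> face2 bases c = [set B0] ->
  face3 t beta c = T0 -> i0 \in T0 -> B \in bases ->
  (forall i, 0 <= w i) -> \sum_(i in S) w i = 1 ->
  (forall j, 0 <= v j) -> \sum_(j in T) v j = 1 ->
  Phi c S w B T v <= Mval c B0 /\
  (Phi c S w B T v = Mval c B0 ->
    [/\ B = B0, (forall i, i \in S -> w i != 0 -> i \in S0) &
        (forall j, j \in T -> v j != 0 -> j \in T0)]).
Proof.
move=> h1 h10 h2 h3 h30 hB w0 ws v0 vs.
have [f1le f1eq] := face1P h1 h10.
have [f3le f3eq] := face3P h3 h30.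
have [B0b B0le B0eq] := face2P h2.
have [s1 s1e] := wsum_le w0 ws f1le.
have [s3 s3e] := wsum_le v0 vs f3le.
have wB := B0le _ hB.
rewrite /Phi /Mval; split; first lra.
move=> e; split.
- by apply: B0eq => //; lra.
- by move=> i iS wi; apply/f1eq; apply: s1e => //; lra.
- by move=> i iS wi; apply/f3eq; apply: s3e => //; lra.
Qed.

Lemma Phi_eq (c : 'rV[R]_k) (S0 B0 T0 : {set 'I_k}) (w v : 'I_k -> R) :
  face1 u alpha c = S0 -> i0 \in S0 -> face2 bases c = [set B0] ->
  face3 t beta c = T0 -> i0 \in T0 ->
  \sum_(i in S0) w i = 1 -> \sum_(j in T0) v j = 1 ->
  Phi c S0 w B0 T0 v = Mval c B0.
Proof.
move=> h1 h10 h2 h3 h30 ws vs.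
have [_ f1eq] := face1P h1 h10.
have [_ f3eq] := face3P h3 h30.
rewrite /Phi /Mval.
rewrite (eq_bigr (fun i => w i * (u * c 0 i0 - alpha i0))); last first.
  by move=> i /f1eq ->.
rewrite [X in _ + _ + X](eq_bigr (fun i => v i * (- (t * c 0 i0) - beta i0))); last first.
  by move=> i /f3eq ->.
by rewrite -!big_distrl /= ws vs !mul1r.
Qed.

Lemma c_struct (c : 'rV[R]_k) (X Y : {set 'I_k}) : face1 u alpha c = i0 |: X -> face3 t beta c = i0 |: Y ->
  u != 0 -> t != 0 ->
  (forall i, i \in X -> i != i0) -> (forall i, i \notin X -> i != i0 -> i \in Y) ->
  forall i, c 0 i = c 0 i0 + (if i \in X then (alpha i - alpha i0) / u
                              else (beta i0 - beta i) / t).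
Proof.
move=> h1 h3 u0 t0 hX hY i.
have [_ f1eq] := face1P h1 (setU11 _ _).
have [_ f3eq] := face3P h3 (setU11 _ _).
case: ifP => iX.
  have /f1eq e : i \in i0 |: X by rewrite in_setU1 iX orbT.
  apply: (mulfI u0); rewrite mulrDr mulrCA divff // mulr1; lra.
case: (eqVneq i i0) => [->|ii0].
  by rewrite subrr mul0r addr0.
have /f3eq e : i \in i0 |: Y by rewrite in_setU1 hY ?iX ?orbT.
apply: (mulfI t0); rewrite mulrDr mulrCA divff // mulr1; lra.
Qed.

End Main.

Lemma gcase (R : realFieldType) (dx dy ex ey : R) (bx1 bx2 bx3 by1 by2 by3 : bool) :
 (dx < dy /\ ey < ex) \/ (dy < dx /\ ex < ey) -> ex <= dx -> ey <= dy ->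
 (bx1 && bx2 -> bx3) -> (bx3 -> bx1 || bx2) ->
 (by1 && by2 -> by3) -> (by3 -> by1 || by2) ->
 (if by1 then dy else ey) < (if bx1 then dx else ex) ->
 (if by2 then dy else ey) < (if bx2 then dx else ex) ->
 (if by3 then dy else ey) < (if bx3 then dx else ex).
Proof.
move=> [[h1 h2]|[h1 h2]] hx hy;
by case: bx1; case: bx2; case: bx3; case: by1; case: by2; case: by3 => //= a b c d;
  (try by [move: (a isT) | move: (b isT) | move: (c isT) | move: (d isT)]); lra.
Qed.

Lemma partP k (X Y : {set 'I_k}) i0 : [disjoint X & Y] /\ X :|: Y = [set~ i0] ->
  forall i, [/\ i \in X -> i != i0, i \in Y -> i != i0,
     i \notin X -> i != i0 -> i \in Y & i \in X -> i \notin Y].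
Proof.
move=> [hd hu] i.
have e : (i \in X) || (i \in Y) = (i != i0) by rewrite -in_setU hu in_setC1.
split.
- by move=> h; rewrite -e h.
- by move=> h; rewrite -e h orbT.
- by move=> /negbTE h; rewrite -e h.
- by move=> h; rewrite (disjointFr hd h).
Qed.

Lemma part3 k (X1 Y1 X2 Y2 X3 Y3 : {set 'I_k}) i0 :
  [disjoint X1 & Y1] /\ X1 :|: Y1 = [set~ i0] ->
  [disjoint X2 & Y2] /\ X2 :|: Y2 = [set~ i0] ->
  [disjoint X3 & Y3] /\ X3 :|: Y3 = [set~ i0] ->
  X1 :&: X2 \subset X3 -> Y1 :&: Y2 \subset Y3 -> forall i,
  ((i \in X1) && (i \in X2) -> i \in X3) /\ (i \in X3 -> (i \in X1) || (i \in X2)).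
Proof.
move=> p1 p2 p3 hX hY i; split.
  by move=> h; apply: (subsetP hX); rewrite inE.
move=> h3.
have [a3 _ _ d3] := partP p3 i.
have [_ _ c1 _] := partP p1 i.
have [_ _ c2 _] := partP p2 i.
have n0 := a3 h3.
case/boolP: (i \in X1) => //= n1; case/boolP: (i \in X2) => // n2.
have : i \in Y3 by apply: (subsetP hY); rewrite inE c1 ?c2.
by rewrite (negbTE (d3 h3)).
Qed.

Unset Implicit Arguments.

(* E = [n] is modelled by 'I_n.+1, the element 1 of [n] being ord0. *)
Theorem mainTheorem9 (R : realFieldType) (n : nat)
    (bases : {set {set 'I_n.+1}}) (hM : is_matroid bases)
    (t u : nat) (ht : (0 < t)%N) (hu : (0 < u)%N)
    (alpha beta : 'I_n.+1 -> R)
    (halpha0 : forall i, 0 < alpha i)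
    (halpha : forall i j : 'I_n.+1, (i < j)%N -> alpha i < alpha j)
    (hbeta0 : forall i, 0 < beta i)
    (hbeta : forall i j : 'I_n.+1, (i < j)%N -> beta i < beta j)
    (X1 Y1 X2 Y2 X3 Y3 B1 B2 B3 : {set 'I_n.+1})
    (hP1 : [disjoint X1 & Y1] /\ X1 :|: Y1 = [set~ ord0])
    (hP2 : [disjoint X2 & Y2] /\ X2 :|: Y2 = [set~ ord0])
    (hP3 : [disjoint X3 & Y3] /\ X3 :|: Y3 = [set~ ord0])
    (hneq : (X1, Y1) <> (X2, Y2))
    (hT1 : top_degree_face bases u%:R t%:R alpha beta
             (ord0 |: X1) B1 (ord0 |: Y1))
    (hT2 : top_degree_face bases u%:R t%:R alpha beta
             (ord0 |: X2) B2 (ord0 |: Y2))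
    (hT3 : top_degree_face bases u%:R t%:R alpha beta
             (ord0 |: X3) B3 (ord0 |: Y3))
    (p : 'rV[R]_n.+1)
    (hp1 : Tface u%:R t%:R (ord0 |: X1) B1 (ord0 |: Y1) p)
    (hp2 : Tface u%:R t%:R (ord0 |: X2) B2 (ord0 |: Y2) p)
    (hX : X1 :&: X2 \subset X3) (hY : Y1 :&: Y2 \subset Y3) :
  Tface u%:R t%:R (ord0 |: X3) B3 (ord0 |: Y3) p /\ B1 = B2 /\ B2 = B3.
Proof.
set uR : R := u%:R; set tR : R := t%:R.
have uR0 : 0 < uR by rewrite ltr0n.
have tR0 : 0 < tR by rewrite ltr0n.
move: hT1 => [c1 [h11 h12 h13 _]].
move: hT2 => [c2 [h21 h22 h23 _]].
move: hT3 => [c3 [h31 h32 h33 _]].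
move: hp1 => [a1 [b1 [q1 [[w1 [w10 [w1o [w1s ea1]]]] [eb1 [[v1 [v10 [v1o [v1s eq1]]]] ep1]]]]]].
move: hp2 => [a2 [b2 [q2 [[w2 [w20 [w2o [w2s ea2]]]] [eb2 [[v2 [v20 [v2o [v2s eq2]]]] ep2]]]]]].
have [B1b B1le B1eq] := face2P h12.
have [B2b B2le B2eq] := face2P h22.
have [B3b B3le B3eq] := face2P h32.
have E11 : Lf c1 p = Phi uR tR alpha beta c1 (ord0 |: X1) w1 B1 (ord0 |: Y1) v1
                   + Hgt alpha beta (ord0 |: X1) w1 (ord0 |: Y1) v1.
  by rewrite ep1 ea1 eb1 eq1; apply: L_Phi.
have E12 : Lf c1 p = Phi uR tR alpha beta c1 (ord0 |: X2) w2 B2 (ord0 |: Y2) v2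
                   + Hgt alpha beta (ord0 |: X2) w2 (ord0 |: Y2) v2.
  by rewrite ep2 ea2 eb2 eq2; apply: L_Phi.
have E21 : Lf c2 p = Phi uR tR alpha beta c2 (ord0 |: X1) w1 B1 (ord0 |: Y1) v1
                   + Hgt alpha beta (ord0 |: X1) w1 (ord0 |: Y1) v1.
  by rewrite ep1 ea1 eb1 eq1; apply: L_Phi.
have E22 : Lf c2 p = Phi uR tR alpha beta c2 (ord0 |: X2) w2 B2 (ord0 |: Y2) v2
                   + Hgt alpha beta (ord0 |: X2) w2 (ord0 |: Y2) v2.
  by rewrite ep2 ea2 eb2 eq2; apply: L_Phi.
have P11 := Phi_eq h11 (setU11 _ _) h12 h13 (setU11 _ _) w1s v1s.
have P22 := Phi_eq h21 (setU11 _ _) h22 h23 (setU11 _ _) w2s v2s.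
have [P12 P12e] := Phi_le h11 (setU11 _ _) h12 h13 (setU11 _ _) B2b w20 w2s v20 v2s.
have [P21 _] := Phi_le h21 (setU11 _ _) h22 h23 (setU11 _ _) B1b w10 w1s v10 v1s.
have [eB21 w2S1 v2T1] : [/\ B2 = B1, (forall i, i \in ord0 |: X2 -> w2 i != 0 -> i \in ord0 |: X1) &
        (forall j, j \in ord0 |: Y2 -> v2 j != 0 -> j \in ord0 |: Y1)].
  by apply: P12e; lra.
subst B2.
have hX1 : forall i, i \in X1 -> i != ord0 by move=> i; case: (partP hP1 i).
have hX2 : forall i, i \in X2 -> i != ord0 by move=> i; case: (partP hP2 i).
have hX3 : forall i, i \in X3 -> i != ord0 by move=> i; case: (partP hP3 i).
have hY1 : forall i, i \notin X1 -> i != ord0 -> i \in Y1 by move=> i; case: (partP hP1 i).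
have hY2 : forall i, i \notin X2 -> i != ord0 -> i \in Y2 by move=> i; case: (partP hP2 i).
have hY3 : forall i, i \notin X3 -> i != ord0 -> i \in Y3 by move=> i; case: (partP hP3 i).
have uR0' : uR != 0 by rewrite gt_eqF.
have tR0' : tR != 0 by rewrite gt_eqF.
have cs1 := c_struct h11 h13 uR0' tR0' hX1 hY1.
have cs2 := c_struct h21 h23 uR0' tR0' hX2 hY2.
have cs3 := c_struct h31 h33 uR0' tR0' hX3 hY3.
set da := fun i => (alpha i - alpha ord0) / uR.
set eb := fun i => (beta ord0 - beta i) / tR.
have deb : forall i, eb i <= da i.
  move=> i; apply: (@le_trans _ _ 0).
    rewrite /eb pmulr_lle0 ?invr_gt0 // subr_le0.
    case: (eqVneq i ord0) => [->|ne]; first by [].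
    by apply/ltW/hbeta; rewrite lt0n.
  rewrite /da pmulr_lge0 ?invr_gt0 // subr_ge0.
  case: (eqVneq i ord0) => [->|ne]; first by [].
  by apply/ltW/halpha; rewrite lt0n.
have ord_de : forall x y : 'I_n.+1, x != y ->
    (da x < da y /\ eb y < eb x) \/ (da y < da x /\ eb x < eb y).
  move=> x y nxy.
  have mono : forall x y : 'I_n.+1, (x < y)%N -> da x < da y /\ eb y < eb x.
    move=> x' y' lt; rewrite /da /eb !ltr_pM2r ?invr_gt0 //.
    by rewrite ltrD2r ltrD2l ltrN2 !halpha ?hbeta.
  case: (ltngtP x y) => [lt|lt|e]; first by left; apply: mono.
    by right; apply: mono.
  by move: nxy; rewrite (ord_inj e) eqxx.
have gstep : forall x y, x != y ->
    c1 0 y < c1 0 x -> c2 0 y < c2 0 x -> c3 0 y < c3 0 x.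
  move=> x y nxy l1 l2.
  rewrite cs1 [c1 0 x]cs1 ltrD2l in l1.
  rewrite cs2 [c2 0 x]cs2 ltrD2l in l2.
  rewrite cs3 [c3 0 x]cs3 ltrD2l.
  have [px1 px2] := part3 hP1 hP2 hP3 hX hY x.
  have [py1 py2] := part3 hP1 hP2 hP3 hX hY y.
  exact: (gcase (ord_de x y nxy) (deb x) (deb y) px1 px2 py1 py2 l1 l2).
have eB13 : B1 = B3.
  case/boolP: [exists i, (i \in B1) != (i \in B3)] => [/existsP [z0 hz0] | hne]; last first.
    apply/setP => i; apply/eqP/negPn; move: hne; rewrite negb_exists => /forallP; apply.
  pose S := (B1 :\: B3) :|: (B3 :\: B1).
  have z0S : z0 \in S.
    by move: hz0; rewrite !inE; case: (z0 \in B1); case: (z0 \in B3).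
  have [z zS zmin] := @arg_minP _ _ _ z0 (mem S) (fun i => c3 0 i) z0S.
  exfalso.
  have zS' : z \in S := zS.
  move: zS'; rewrite /S in_setU => /orP [zB|zB].
  - have [y yB ex] := hM.2 B1 B3 B1b B3b z zB.
    move: zB yB; rewrite !inE => /andP [nz3 z1] /andP [ny1 y3].
    have zy : z != y by apply: contraNneq ny1 => <-.
    have st : forall c : 'rV[R]_n.+1, face2 bases c = [set B1] -> c 0 y < c 0 z.
      move=> c hc; have [_ le eq] := face2P hc.
      have hle := le _ ex; have hne : (B1 :\ z :|: [set y]) != B1.
        by apply: contraNneq ny1 => <-; rewrite in_setU set11 orbT.
      have : wt c (B1 :\ z :|: [set y]) < wt c B1.
        by rewrite lt_neqAle hle andbT; apply: contra hne => /eqP /(eq _ ex) ->.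
      by rewrite wt_exch //; lra.
    have yS : y \in S by rewrite /S in_setU !in_setD ny1 y3 /= ?orbT ?andbF.
    have := zmin y yS.
    by rewrite leNgt (gstep z y zy (st _ h12) (st _ h22)).
  - have [y yB ex] := hM.2 B3 B1 B3b B1b z zB.
    move: zB yB; rewrite !inE => /andP [nz1 z3] /andP [ny3 y1].
    have hle := B3le _ ex; have hne : (B3 :\ z :|: [set y]) != B3.
      by apply: contraNneq ny3 => <-; rewrite in_setU set11 orbT.
    have : wt c3 (B3 :\ z :|: [set y]) < wt c3 B3.
      by rewrite lt_neqAle hle andbT; apply: contra hne => /eqP /(B3eq _ ex) ->.
    rewrite wt_exch // => lt.
    have yS : y \in S by rewrite /S in_setU !in_setD ny3 y1.
    have := zmin y yS.
    rewrite leNgt; suff -> : c3 0 y < c3 0 z by []. lra.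
subst B3.
split; last by [].
have inS3 : forall (A1 A2 A3 : {set 'I_n.+1}), A1 :&: A2 \subset A3 ->
    forall i, i \in ord0 |: A1 -> i \in ord0 |: A2 -> i \in ord0 |: A3.
  move=> A1 A2 A3 hA i; rewrite !in_setU1; case: (i == ord0) => //= m1 m2.
  by apply: (subsetP hA); rewrite inE m1 m2.
have w2z : forall i, i \notin ord0 |: X3 -> w2 i = 0.
  move=> i hi; case/boolP: (w2 i == 0) => [/eqP //|wi]; exfalso; move/negP: hi; apply.
  have i2 : i \in ord0 |: X2.
    by case/boolP: (i \in ord0 |: X2) => // ni; rewrite w2o ?eqxx in wi.
  exact: inS3 hX i (w2S1 i i2 wi) i2.
have v2z : forall i, i \notin ord0 |: Y3 -> v2 i = 0.
  move=> i hi; case/boolP: (v2 i == 0) => [/eqP //|wi]; exfalso; move/negP: hi; apply.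
  have i2 : i \in ord0 |: Y2.
    by case/boolP: (i \in ord0 |: Y2) => // ni; rewrite v2o ?eqxx in wi.
  exact: inS3 hY i (v2T1 i i2 wi) i2.
exists a2, (ind R B1), q2; split; last split; last split => //.
- exists w2; split => //; split => //; split.
    by rewrite sum_out // -w2s sum_out.
  rewrite ea2 (sum_outV _ (S := ord0 |: X3)); last by move=> i /w2z ->; rewrite scale0r.
  by rewrite sum_outV // => i /w2o ->; rewrite scale0r.
- by [].
- exists v2; split => //; split => //; split.
    by rewrite sum_out // -v2s sum_out.
  rewrite eq2 (sum_outV _ (S := ord0 |: Y3)); last by move=> i /v2z ->; rewrite scale0r.
  by rewrite sum_outV // => i /v2o ->; rewrite scale0r.
- by rewrite ep2 eb2.
Qed.
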